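(* Let $r,n\ge1$, $\gcd(a,b)=1$, and $T=\{(t^{-p},t^{-q})\}\subset(\mathbb{C}^* )^2$ with generic integers $p\gg q>0$. For every $\lambda\in B^r_{a,b;n}$, the dimension of the subspace $T^+_\lambda H^r_{a,b;n}$ of the tangent space to $H^r_{a,b;n}$ at $I_\lambda$ on which $T$ acts with positive weight equals the Betti statistic $\beta(\lambda)$.
   Context: $G_{a,b;n}$ is the cyclic group generated by $\mathrm{diag}(\zeta^a,\zeta^b)$, $\zeta$ a primitive $n$-th root of unity, acting on $\mathbb{C}[x,y]$ by $(x,y)\mapsto(\zeta^ax,\zeta^by)$; $H^r_{a,b;n}$ is the moduli scheme of $G_{a,b;n}$-invariant ideals $I$ with $\mathbb{C}[x,y]/I\cong\mathbb{C}[G_{a,b;n}]^r$; $(\mathbb{C}^* )^2$ acts by $(t_1,t_2)\cdot I=\{f(t_1x,t_2y):f\in I\}$. Partitions are Young diagrams $\lambda\subset\mathbb{Z}_{\ge0}^2$; $I_\lambda$ is generated by $x^iy^j$ for $(i,j)\notin\lambda$; $l(j)=\#\{i:(i,j)\in\lambda\}$, $c(i)=\#\{j:(i,j)\in\lambda\}$; box $(i,j)$ has color $ai+bj\bmod n$; $B^r_{a,b;n}$ is the set of partitions of $rn$ in which each color occurs exactly $r$ times. An arrow from $(l,s)$ to $(i',j')$ is invariant if $a(l-i')+b(s-j')\equiv0\pmod n$; $d_{i,j}$ is the arrow from $(l(j),j)$ to $(i,c(i)-1)$, $u_{i,j}$ the arrow from $(i,c(i))$ to $(l(j)-1,j)$;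 $\beta(\lambda)=\#\{(i,j)\in\lambda:d_{i,j}\text{ invariant}\}+\#\{(i,j)\in\lambda:u_{i,j}\text{ invariant and } i=l(j)-1\}$. *)

(* Defs.v *)
From HB Require Import structures.
From mathcomp Require Import all_boot all_order all_algebra.
Set Implicit Arguments. Unset Strict Implicit. Unset Printing Implicit Defensive.
Import Order.TTheory GRing.Theory Num.Theory.
Local Open Scope ring_scope.

(* A Young diagram is encoded by its list of row lengths s = [l(0); l(1); ...],
   nonincreasing and positive; box (i,j) lies in lambda iff i < l(j). *)
Definition is_partition (s : seq nat) : bool :=
  sorted geq s && all (fun k => (0 < k)%N) s.

Definition rowl (s : seq nat) (j : nat) : nat := nth 0%N s j.
Definition colh (s : seq nat) (i : nat) : nat := count (fun k => (i < k)%N) s.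
Definition in_diag (s : seq nat) (i j : nat) : bool := (i < rowl s j)%N.

Definition color (a b : int) (n : nat) (i j : nat) : int :=
  ((a * i%:Z + b * j%:Z) %% n%:Z)%Z.

Definition ncolor (a b : int) (n : nat) (s : seq nat) (k : int) : nat :=
  (\sum_(j < size s) \sum_(i < rowl s j) (color a b n i j == k))%N.

Definition in_B (r : nat) (a b : int) (n : nat) (s : seq nat) : bool :=
  [&& is_partition s, sumn s == (r * n)%N &
      [forall k : 'I_n, ncolor a b n s (nat_of_ord k)%:Z == r]].

Definition inv_arrow (a b : int) (n : nat) (l s i' j' : int) : bool :=
  (n%:Z %| a * (l - i') + b * (s - j'))%Z.

Definition d_inv (a b : int) (n : nat) (s : seq nat) (i j : nat) : bool :=
  inv_arrow a b n (rowl s j)%:Z j%:Z i%:Z ((colh s i)%:Z - 1).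
Definition u_inv (a b : int) (n : nat) (s : seq nat) (i j : nat) : bool :=
  inv_arrow a b n i%:Z (colh s i)%:Z ((rowl s j)%:Z - 1) j%:Z.

Definition beta (a b : int) (n : nat) (s : seq nat) : nat :=
  (\sum_(j < size s) \sum_(i < rowl s j)
      (d_inv a b n s i j + (u_inv a b n s i j && (nat_of_ord i == (rowl s j).-1)%N)))%N.

(* R = K[x,y].  I_lambda has K-basis the monomials x^i y^j, (i,j) not in lambda,
   and R/I_lambda has K-basis the classes e_{k,l} of x^k y^l, (k,l) in lambda.
   A K-linear map phi : I_lambda -> R/I_lambda is thus its matrix:
   phi i j k l = coefficient of e_{k,l} in phi(x^i y^j)
   (set to 0 outside the index ranges).  It is R-linear iff it commutes with
   multiplication by x and by y. *)
Definition homfun (K : Type) := nat -> nat -> nat -> nat -> K.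

Definition is_hom (K : fieldType) (s : seq nat) (phi : homfun K) : Prop :=
  [/\ (forall i j k l, (in_diag s i j || ~~ in_diag s k l) -> phi i j k l = 0),
      (* phi(x * x^i y^j) = x * phi(x^i y^j) in R/I *)
      (forall i j k l, ~~ in_diag s i j -> in_diag s k l ->
         phi i.+1 j k l = (if k is k'.+1 then phi i j k' l else 0)) &
      (* phi(y * x^i y^j) = y * phi(x^i y^j) in R/I *)
      (forall i j k l, ~~ in_diag s i j -> in_diag s k l ->
         phi i j.+1 k l = (if l is l'.+1 then phi i j k l' else 0))].

(* action of (t1,t2) in (K^* )^2 (induced by (t1,t2).f = f(t1 x, t2 y))
   on Hom(I,R/I):  (t.phi)(f) = t.(phi(t^{-1}.f)). *)
Definition act (K : fieldType) (t1 t2 : K) (phi : homfun K) : homfun K :=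
  fun i j k l => t1 ^ (k%:Z - i%:Z) * t2 ^ (l%:Z - j%:Z) * phi i j k l.

(* G_{a,b;n}-invariant homomorphisms: fixed by the generator diag(zeta^a, zeta^b) *)
Definition tangent (K : fieldType) (zeta : K) (a b : int) (s : seq nat)
  (phi : homfun K) : Prop :=
  is_hom s phi /\ act (zeta ^ a) (zeta ^ b) phi = phi.

Definition T_weight (K : fieldType) (p q : nat) (w : int) (phi : homfun K) : Prop :=
  forall t : K, t != 0 ->
    act (t ^ (- p%:Z)) (t ^ (- q%:Z)) phi = (fun i j k l => t ^ w * phi i j k l).

Definition lincomb (K : fieldType) (m : nat) (c : 'I_m -> K) (v : 'I_m -> homfun K)
  : homfun K := fun i j k l => \sum_(h < m) c h * v h i j k l.

Definition in_span (K : fieldType) (P : homfun K -> Prop) (phi : homfun K) : Prop :=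
  exists m (c : 'I_m -> K) (v : 'I_m -> homfun K),
    (forall h, P (v h)) /\ phi = lincomb c v.

Definition Tplus (K : fieldType) (zeta : K) (a b : int) (p q : nat) (s : seq nat)
  : homfun K -> Prop :=
  in_span (fun phi => tangent zeta a b s phi /\ exists w : int, 0 < w /\ T_weight p q w phi).

Definition has_dim (K : fieldType) (V : homfun K -> Prop) (d : nat) : Prop :=
  exists B : 'I_d -> homfun K,
    [/\ forall h, V (B h),
        (forall c : 'I_d -> K, lincomb c B = (fun _ _ _ _ => 0) -> forall h, c h = 0) &
        (forall phi, V phi -> exists c : 'I_d -> K, phi = lincomb c B)].

(* Main.v *)
Require Import Defs.
From HB Require Import structures.
From mathcomp Require Import all_boot all_order all_algebra.
From mathcomp Require Import zify ring.
From Stdlib Require Import FunctionalExtensionality.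
Import Order.TTheory GRing.Theory Num.Theory.
Set Implicit Arguments. Unset Strict Implicit. Unset Printing Implicit Defensive.

Definition stp (len : nat -> nat) (A y l : nat) : bool :=
  (len y < A) || (len l.+1 + A <= len y).
Fixpoint srch (len : nat -> nat) (A f y l : nat) : nat :=
  if f is f'.+1 then (if stp len A y l then y else srch len A f' y.+1 l.+1) else y.
Definition own (len : nat -> nat) (N A y l : nat) : option nat :=
  let t := srch len A N y l in if A <= len t then Some t else None.

Lemma srch_ge len A f y l : y <= srch len A f y l.
Proof.
elim: f y l => [|f IH] y l //=; case: ifP => // _.
by apply: leq_trans (IH _ _); lia.
Qed.

Lemma srch_fuel len N A : 0 < A -> (forall t, N <= t -> len t = 0) ->
  forall f1 f2 y l, N <= y + f1 -> N <= y + f2 -> srch len A f1 y l = srch len A f2 y l.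
Proof.
move=> A0 lN; elim=> [|f1 IH] [|f2] y l /= h1 h2 //.
- have -> : stp len A y l by rewrite /stp lN ?A0 //; lia.
  by [].
- have -> : stp len A y l by rewrite /stp lN ?A0 //; lia.
  by [].
- case: ifP => // _; apply: IH; lia.
Qed.

Lemma srch_stop len N A : 0 < A -> (forall t, N <= t -> len t = 0) ->
  forall f y l, N <= y + f -> stp len A (srch len A f y l) (l + (srch len A f y l - y)).
Proof.
move=> A0 lN; elim=> [|f IH] y l /= h.
- by rewrite /stp lN ?A0 //; lia.
- case: ifP => [H|_]; first by rewrite subnn addn0.
  have := IH y.+1 l.+1 ltac:(lia).
  have := srch_ge len A f y.+1 l.+1.
  set t := srch _ _ _ _ _ => ht.
  have -> : l.+1 + (t - y.+1) = l + (t - y) by lia.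
  by [].
Qed.

Lemma own_unfold len N A y l : 0 < A -> (forall t, N <= t -> len t = 0) ->
  own len N A y l = if stp len A y l then (if A <= len y then Some y else None)
                    else own len N A y.+1 l.+1.
Proof.
move=> A0 lN; rewrite /own.
rewrite (@srch_fuel len N A A0 lN N N.+1 y l); [|lia|lia].
rewrite [srch _ _ N.+1 _ _]/=; by case: (stp len A y l).
Qed.

Lemma srch_inv len N A : 0 < A -> (forall t, N <= t -> len t = 0) ->
  (forall a b, a <= b -> len b <= len a) ->
  forall f y l, len y < len l + A ->
  len (srch len A f y l) < len (l + (srch len A f y l - y)) + A.
Proof.
move=> A0 lN mono; elim=> [|f IH] y l /= h.
- by rewrite subnn addn0.
- case: ifP => [_|]; first by rewrite subnn addn0.
  rewrite /stp => /negbT; rewrite negb_or -!ltnNge => /andP[h1 h2].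
  have h3 : len y.+1 < len l.+1 + A by have := mono y y.+1 (leqnSn _); lia.
  have := IH _ _ h3; have := srch_ge len A f y.+1 l.+1.
  set t := srch _ _ _ _ _ => ht.
  by have -> : l.+1 + (t - y.+1) = l + (t - y) by lia.
Qed.

Lemma own_some len N A y l t : 0 < A -> (forall t, N <= t -> len t = 0) ->
  own len N A y l = Some t ->
  [/\ y <= t, A <= len t & len (l + (t - y)).+1 + A <= len t].
Proof.
move=> A0 lN; rewrite /own; case: ifP => // hA [<-].
split; [exact: srch_ge | exact: hA |].
have := @srch_stop len N A A0 lN N y l ltac:(lia).
by rewrite /stp ltnNge hA.
Qed.

Lemma own_some_inv len N A y l t : 0 < A -> (forall t, N <= t -> len t = 0) ->
  (forall a b, a <= b -> len b <= len a) -> len y < len l + A ->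
  own len N A y l = Some t -> len t < len (l + (t - y)) + A.
Proof.
move=> A0 lN mono h; rewrite /own; case: ifP => // _ [<-].
exact: (srch_inv A0 lN mono N h).
Qed.

Lemma own_x0 len N x y l : (forall t, N <= t -> len t = 0) ->
  len y <= x -> own len N x.+1 y l = None.
Proof.
move=> lN h; rewrite own_unfold //.
by rewrite /stp ltnS h /= leqNgt ltnS h.
Qed.

Lemma own_le len N A y l t : 0 < A -> (forall t, N <= t -> len t = 0) ->
  own len N A y l = Some t -> y <= t /\ A <= len t.
Proof. by move=> A0 lN /(own_some A0 lN) []. Qed.

Lemma own_y len N A x y k l : 0 < A -> (forall t, N <= t -> len t = 0) ->
  (forall a b, a <= b -> len b <= len a) ->
  len y <= x -> k < len l.+1 -> A = x - k ->
  own len N A y.+1 l.+1 = own len N A y l.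
Proof.
move=> A0 lN mono hx hk hA.
rewrite [RHS]own_unfold //; case: ifP => // /orP[h|h].
- rewrite leqNgt h.
  case E: own => [t|] //; have [h1 h2] := own_le A0 lN E.
  have := mono _ _ (ltnW h1); lia.
- lia.
Qed.

Lemma own_y0 len N A y l : 0 < A -> (forall t, N <= t -> len t = 0) ->
  (forall a b, a <= b -> len b <= len a) ->
  l < y -> own len N A y l = None.
Proof.
move=> A0 lN mono h.
case E: own => [t|] //; have [h1 h2 h3] := own_some A0 lN E.
have := mono (l + (t - y)).+1 t ltac:(lia); lia.
Qed.

Definition ahom (K : fieldType) (len : nat -> nat) (phi : homfun K) : Prop :=
  [/\ (forall x y k l, (x < len y) || ~~ (k < len l) -> phi x y k l = 0%R),
      (forall x y k l, ~~ (x < len y) -> k < len l ->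
         phi x.+1 y k l = (if k is k'.+1 then phi x y k' l else 0%R)) &
      (forall x y k l, ~~ (x < len y) -> k < len l ->
         phi x y.+1 k l = (if l is l'.+1 then phi x y k l' else 0%R))].

Lemma hom_ahom (K : fieldType) s (phi : homfun K) : is_hom s phi -> ahom (rowl s) phi.
Proof. by []. Qed.

Lemma HL (K : fieldType) len (phi : homfun K) A : ahom len phi -> 0 < A ->
  forall x y l, len y <= x -> A <= x -> x - A < len l ->
  phi x y (x - A) l = if len y < A then 0%R else phi (len y) y (len y - A) l.
Proof.
move=> [h0 hx hy] A0; elim=> [|x IH] y l h1 h2 h3; first lia.
case: (boolP ((len y <= x) && (A <= x))) => [/andP[h4 h5]|].
- rewrite subSn // hx; last by lia. by apply: IH => //; lia.
  by rewrite -ltnNge ltnS.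
- rewrite negb_and -!ltnNge => /orP[h4|h4].
  + have e : len y = x.+1 by lia.
    by rewrite e ltnNge h2 /=.
  + have e : A = x.+1 by lia.
    rewrite e subnn.
    case: (ltnP (len y) x.+1) => hl.
    * by rewrite hx //; [rewrite -ltnNge; lia | lia].
    * have e2 : len y = x.+1 by lia.
      by rewrite e2 subnn.
Qed.

Lemma ML_f (K : fieldType) len N (phi : homfun K) A : ahom len phi -> 0 < A ->
  (forall t, N <= t -> len t = 0) -> (forall a b, a <= b -> len b <= len a) ->
  forall f x y l, N <= y + f -> len y <= x -> A <= x -> x - A < len l ->
  phi x y (x - A) l =
  (let t := srch len A f y l in
   if A <= len t then phi (len t) t (len t - A) (l + (t - y)) else 0%R).
Proof.
move=> hphi A0 lN mono; have [h0 hx hy] := hphi.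
elim=> [|f IH] x y l hf h1 h2 h3.
- rewrite /= (HL hphi) // subnn addn0 ltnNge; by case: (A <= len y).
- rewrite /=; case: (boolP (stp len A y l)) => hs.
  + rewrite (HL hphi) // subnn addn0 ltnNge; by case: (A <= len y).
  + move: hs; rewrite /stp negb_or -!ltnNge => /andP[h4 h5].
    have h4' : (len y < A) = false by lia.
    rewrite (HL hphi) // h4' /=.
    rewrite -(hy (len y) y (len y - A) l.+1); last lia; last by rewrite ltnn.
    rewrite (IH (len y) y.+1 l.+1) //; try lia; last by apply: mono.
    have := srch_ge len A f y.+1 l.+1.
    set t := srch _ _ _ _ _ => ht.
    by rewrite /= (_ : l.+1 + (t - y.+1) = l + (t - y)); last lia.
Qed.

Lemma ML (K : fieldType) len N (phi : homfun K) A : ahom len phi -> 0 < A ->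
  (forall t, N <= t -> len t = 0) -> (forall a b, a <= b -> len b <= len a) ->
  forall x y l, len y <= x -> A <= x -> x - A < len l ->
  phi x y (x - A) l =
  match own len N A y l with
  | Some t => phi (len t) t (len t - A) (l + (t - y)) | None => 0%R end.
Proof.
move=> hphi A0 lN mono x y l h1 h2 h3.
rewrite (ML_f hphi A0 lN mono (f:=N)) //; last lia.
by rewrite /own /=; case: ifP.
Qed.

Lemma sorted_all_le (x : nat) s : sorted geq (x :: s) -> all (fun y => y <= x) s.
Proof.
move=> H; have := order_path_min (leT := geq) _ H.
by apply; move=> a b c /= h1 h2; exact: leq_trans h2 h1.
Qed.

Lemma colh0 s i : all (fun y => y <= i) s -> colh s i = 0.
Proof.
move=> H; rewrite /colh; apply/eqP; rewrite -leqn0 leqNgt -has_count.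
by apply/hasPn => y /(allP H); rewrite -leqNgt.
Qed.

Lemma diag s i j : sorted geq s -> (i < rowl s j) = (j < colh s i).
Proof.
elim: s j => [|x s IH] j /=; first by rewrite /rowl /colh nth_nil.
move=> H; have Hs : sorted geq s by exact: path_sorted H.
have Ha := sorted_all_le H.
rewrite /rowl /colh /= -/(colh s i).
case: (ltnP i x) => hix /=.
- case: j => [|j] //=; rewrite add1n ltnS; exact: IH.
- have -> : colh s i = 0 by apply: colh0; apply/allP => y hy; exact: leq_trans (allP Ha y hy) hix.
  case: j => [|j] //=; first by rewrite ltnNge hix.
  case: (ltnP j (size s)) => hj.
  + have := allP Ha _ (mem_nth 0 hj) => h.
    by rewrite ltnNge (leq_trans h hix).
  + by rewrite nth_default.
Qed.

Lemma rowl_mono s : sorted geq s -> forall a b, a <= b -> rowl s b <= rowl s a.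
Proof.
move=> H a b hab; rewrite /rowl.
case: (ltnP b (size s)) => hb; last by rewrite nth_default.
have ha : a < size s by exact: leq_ltn_trans hab hb.
have := sorted_leq_nth (leT := geq) _ _ 0 H.
move=> /(_ _ _ a b ha hb hab) //=; apply.
- by move=> p q w /= h1 h2; exact: leq_trans h2 h1.
- by move=> p /=.
Qed.

Lemma colh_mono s a b : a <= b -> colh s b <= colh s a.
Proof. move=> hab; apply: sub_count => y /= h; exact: leq_ltn_trans hab h. Qed.

Lemma rowlN s t : size s <= t -> rowl s t = 0.
Proof. by move=> h; rewrite /rowl nth_default. Qed.

Lemma colhN s t : sumn s <= t -> colh s t = 0.
Proof.
move=> h; apply: colh0; apply/allP => y hy.
apply: leq_trans h; elim: s hy => [|z s IH] //=.
rewrite in_cons => /orP[/eqP->|/IH h]; [exact: leq_addr | exact: leq_trans h (leq_addl _ _)].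
Qed.

Lemma colh_size s i : colh s i <= size s.
Proof. exact: count_size. Qed.

Lemma size_sumn s : all (fun k => 0 < k) s -> size s <= sumn s.
Proof. elim: s => [|x s IH] //= /andP[h1 h2]; have := IH h2; lia. Qed.

Lemma hom_ahomT (K : fieldType) s (phi : homfun K) : sorted geq s -> is_hom s phi ->
  ahom (colh s) (fun x y k l => phi y x l k).
Proof.
move=> Hs [h0 hx hy]; split.
- move=> x y k l; rewrite -!diag //; exact: h0.
- move=> x y k l; rewrite -!diag // => h1 h2; exact: hy.
- move=> x y k l; rewrite -!diag // => h1 h2; exact: hx.
Qed.

Definition arrow := (nat * nat * bool)%type.

Definition owner (s : seq nat) (x y k l : nat) : option arrow :=
  if (x < rowl s y) || ~~ (k < rowl s l) then None
  else if k < x then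
    omap (fun t => (rowl s t - (x - k), t, false)) (own (rowl s) (size s) (x - k) y l)
  else if (k == x) && (l < y) then
    omap (fun t => (t, colh s t - (y - l), true)) (own (colh s) (sumn s) (y - l) x k)
  else None.

Lemma O2 s x y k l : sorted geq s -> ~~ (x < rowl s y) -> k < rowl s l ->
  owner s x.+1 y k l = if k is k'.+1 then owner s x y k' l else None.
Proof.
move=> Hs hx hk; rewrite /owner.
have -> : (x.+1 < rowl s y) = false by move: hx; rewrite -leqNgt; lia.
rewrite hk /=.
case: k hk => [|k] hk.
- rewrite subn0 (own_x0 (len := rowl s) (N := size s)) //.
  + by move=> t ht; apply: rowlN.
  + by rewrite leqNgt.
- have -> : (x < rowl s y) = false by apply: negbTE.
  have -> : k < rowl s l by lia.
  rewrite /= ltnS subSS eqSS.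
  case: ifP => // _; case: ifP => // /andP[/eqP ek hl].
  rewrite (own_y (len := colh s) (N := sumn s) (x := y) (k := l)) //.
  + lia.
  + by move=> t ht; apply: colhN.
  + by move=> a b; apply: colh_mono.
  + by rewrite leqNgt -diag.
  + by rewrite -diag.
Qed.

Lemma O3 s x y k l : sorted geq s -> ~~ (x < rowl s y) -> k < rowl s l ->
  owner s x y.+1 k l = if l is l'.+1 then owner s x y k l' else None.
Proof.
move=> Hs hx hk; rewrite /owner.
have -> : (x < rowl s y.+1) = false.
  by have := rowl_mono Hs (leqnSn y); move: hx; rewrite -leqNgt; lia.
rewrite hk /=.
case: l hk => [|l] hk.
- case: ifP => hkx.
  + rewrite (own_y0 (len := rowl s) (N := size s)) //.
    * lia.
    * by move=> t ht; apply: rowlN.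
    * exact: rowl_mono.
  + rewrite ltn0Sn andbT subn0; case: ifP => // /eqP ek.
    rewrite (own_x0 (len := colh s) (N := sumn s)) //.
    * by move=> t ht; apply: colhN.
    * by rewrite leqNgt -diag.
- have -> : (x < rowl s y) = false by apply: negbTE.
  have -> : k < rowl s l by have := rowl_mono Hs (leqnSn l); lia.
  rewrite /= ltnS subSS.
  case: ifP => // hkx.
  rewrite (own_y (len := rowl s) (N := size s) (x := x) (k := k)) //.
  + lia.
  + by move=> t ht; apply: rowlN.
  + exact: rowl_mono.
  + by rewrite leqNgt.
Qed.

Definition Bvec (K : fieldType) (s : seq nat) (al : arrow) : homfun K :=
  fun x y k l => (((owner s x y k l == Some al)%:R)%R : K).

Lemma Bvec_hom (K : fieldType) s al : sorted geq s -> is_hom s (Bvec K s al).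
Proof.
move=> Hs; split.
- move=> x y k l h; rewrite /Bvec /owner.
  by rewrite /in_diag in h; rewrite h.
- move=> x y k l h1 h2; rewrite /Bvec O2 //; by case: k {h2}.
- move=> x y k l h1 h2; rewrite /Bvec O3 //; by case: l {h2}.
Qed.

Lemma factsD s A y l t : sorted geq s -> 0 < A -> rowl s y < rowl s l + A ->
  own (rowl s) (size s) A y l = Some t ->
  [/\ y <= t, A <= rowl s t, t < size s & colh s (rowl s t - A) = (l + (t - y)).+1].
Proof.
move=> Hs A0 h E.
have lN : forall t, size s <= t -> rowl s t = 0 by move=> u hu; apply: rowlN.
have [h1 h2 h3] := own_some A0 lN E.
have h4 := own_some_inv A0 lN (rowl_mono Hs) h E.
split => //.
- by rewrite ltnNge; apply/negP => /rowlN; lia.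
- set m := l + (t - y); set i := rowl s t - A.
  have e1 : m < colh s i by rewrite -diag //; rewrite /i /m; lia.
  have e2 : ~~ (m.+1 < colh s i) by rewrite -diag // /i /m; lia.
  lia.
Qed.

Lemma factsU s A x t : sorted geq s -> 0 < A ->
  own (colh s) (sumn s) A x x = Some t ->
  [/\ x <= t, A <= colh s t & rowl s (colh s t - A) = t.+1].
Proof.
move=> Hs A0 E.
have lN : forall t, sumn s <= t -> colh s t = 0 by move=> u hu; apply: colhN.
have [h1 h2 h3] := own_some A0 lN E.
split => //.
set j := colh s t - A.
have e1 : t < rowl s j by rewrite diag // /j; lia.
have e2 : ~~ (t.+1 < rowl s j).
  rewrite diag // /j; move: h3; rewrite (_ : x + (t - x) = t); last lia. lia.
lia.
Qed.

Definition piv (s : seq nat) (al : arrow) : nat * nat * nat * nat :=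
  let '(i, j, kd) := al in
  if kd then (i, colh s i, (rowl s j).-1, j) else (rowl s j, j, i, (colh s i).-1).

Definition atp (K : Type) (phi : nat -> nat -> nat -> nat -> K) (p : nat * nat * nat * nat) : K :=
  phi p.1.1.1 p.1.1.2 p.1.2 p.2.

Definition genuine (s : seq nat) (al : arrow) : bool :=
  let '(i, j, kd) := al in
  [&& j < size s, i < rowl s j & (kd ==> (i == (rowl s j).-1))].

Lemma owner_piv s al : sorted geq s -> genuine s al -> atp (owner s) (piv s al) = Some al.
Proof.
move=> Hs; case: al => [[i j] []] /= /and3P[hj hi he]; rewrite /atp /owner /=.
- move/eqP: he => he.
  have hc : j < colh s i by rewrite -diag.
  have -> : (i < rowl s (colh s i)) = false by rewrite diag // ltnn.
  rewrite -he hi /= ltnn eqxx hc /=.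
  rewrite own_unfold //; last first.
  + by move=> u hu; apply: colhN.
  + lia.
  have e2 : ~~ (j < colh s i.+1) by rewrite -diag //; lia.
  rewrite /stp.
  have -> : (colh s i.+1 + (colh s i - j) <= colh s i) by lia.
  rewrite orbT (_ : colh s i - j <= colh s i); last lia.
  by rewrite /= (_ : colh s i - (colh s i - j) = j); last lia.
- have hc : j < colh s i by rewrite -diag.
  have -> : (rowl s j < rowl s j) = false by rewrite ltnn.
  have -> : i < rowl s (colh s i).-1 by rewrite diag //; lia.
  rewrite hi /=.
  rewrite own_unfold //; last first.
  + by move=> u hu; apply: rowlN.
  + lia.
  have e2 : ~~ (i < rowl s (colh s i)) by rewrite diag // ltnn.
  rewrite /stp (_ : (colh s i).-1.+1 = colh s i); last lia.
  have -> : rowl s (colh s i) + (rowl s j - i) <= rowl s j by lia.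
  rewrite orbT (_ : rowl s j - i <= rowl s j); last lia.
  by rewrite /= (_ : rowl s j - (rowl s j - i) = i); last lia.
Qed.

Definition dk (s : seq nat) (al : arrow) : int :=
  let '(i, j, kd) := al in if kd then 0%R else (i%:Z - (rowl s j)%:Z)%R.
Definition dl (s : seq nat) (al : arrow) : int :=
  let '(i, j, kd) := al in
  if kd then (j%:Z - (colh s i)%:Z)%R else ((colh s i)%:Z - 1 - j%:Z)%R.

Lemma owner_facts s x y k l al : sorted geq s -> owner s x y k l = Some al ->
  [/\ genuine s al, ~~ (x < rowl s y), k < rowl s l,
      (k%:Z - x%:Z = dk s al)%R & (l%:Z - y%:Z = dl s al)%R].
Proof.
move=> Hs; rewrite /owner; case: ifP => // /norP[hx /negbNE hk].
case: ifP => [hkx|_].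
- case E: own => [t|] //= [<-].
  have [h1 h2 h3 h4] := factsD Hs (A := x - k) (y := y) (l := l) ltac:(lia) ltac:(lia) E.
  split => //=.
  + rewrite h3 /=; apply/andP; split => //; lia.
  + lia.
  + rewrite h4; lia.
- case: ifP => // /andP[/eqP ek hl]; subst k.
  case E: own => [t|] //= [<-].
  have [h1 h2 h3] := factsU Hs (A := y - l) ltac:(lia) E.
  split => //=.
  + apply/and3P; split.
    * have := colh_size s t; lia.
    * rewrite h3; lia.
    * rewrite h3 /=; apply/eqP; lia.
  + lia.
  + lia.
Qed.

Lemma ML_D (K : fieldType) s (phi : homfun K) x y k l : sorted geq s -> is_hom s phi ->
  ~~ (x < rowl s y) -> k < rowl s l -> (k < x) || ((k == x) && (l < y)) ->
  phi x y k l = match owner s x y k l with Some al => atp phi (piv s al) | None => 0%R end.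
Proof.
move=> Hs hphi hx hk /orP[hkx|/andP[/eqP ek hl]].
- have e : k = x - (x - k) by lia.
  rewrite {1}e (ML (N := size s) (hom_ahom hphi)) //; try lia.
  + rewrite /owner (negbTE hx) hk /= hkx.
    case E: own => [t|] //=.
    have [h1 h2 h3 h4] := factsD Hs (A := x - k) (y := y) (l := l) ltac:(lia) ltac:(lia) E.
    by rewrite /atp /= h4.
  + by move=> t ht; apply: rowlN.
  + exact: rowl_mono.
- subst k.
  have := ML (N := sumn s) (hom_ahomT Hs hphi) (A := y - l) ltac:(lia)
    (fun t ht => colhN ht) (fun a b => @colh_mono s a b) (x := y) (y := x) (l := x).
  rewrite (_ : y - (y - l) = l); last lia.
  move=> ->; first last.
  + rewrite -diag //; lia.
  + lia.
  + by rewrite leqNgt -diag.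
  rewrite /owner (negbTE hx) hk /= ltnn eqxx hl /=.
  case E: own => [t|] //=.
  have [h1 h2 h3] := factsU Hs (A := y - l) ltac:(lia) E.
  by rewrite /atp /= h3 /= (_ : x + (t - x) = t); last lia.
Qed.

Definition good (a b : int) (n : nat) (s : seq nat) (al : arrow) : bool :=
  let '(i, j, kd) := al in
  genuine s al && (if kd then u_inv a b n s i j else d_inv a b n s i j).

Definition cand (s : seq nat) : seq arrow :=
  flatten [seq flatten [seq [:: (i, j, false); (i, j, true)] | i <- iota 0 (rowl s j)]
          | j <- iota 0 (size s)].

Definition arrows a b n s : seq arrow := filter (good a b n s) (cand s).

Lemma uniq_flatten_key (T U : eqType) (g : T -> U) (F : U -> seq T) s :
  uniq s -> (forall x, uniq (F x)) -> (forall x z, z \in F x -> g z = x) ->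
  uniq (flatten (map F s)).
Proof.
move=> Us UF G; elim: s Us => [|x s IH] //= /andP[hx hs].
rewrite cat_uniq UF IH // andbT.
apply/hasPn => z /flatten_mapP [y hy hz2]; apply/negP => hz.
have e1 := G _ _ hz; have e2 := G _ _ hz2.
by move: hx; rewrite -e1 e2 hy.
Qed.

Lemma cand_uniq s : uniq (cand s).
Proof.
apply: (uniq_flatten_key (g := fun z : arrow => z.1.2)).
- exact: iota_uniq.
- move=> j; apply: (uniq_flatten_key (g := fun z : arrow => z.1.1)).
  + exact: iota_uniq.
  + by move=> i /=; rewrite !inE andbT; apply/eqP => -[].
  + by move=> i z; rewrite !inE => /orP[/eqP->|/eqP->].
- move=> j z /flatten_mapP [i _]; by rewrite !inE => /orP[/eqP->|/eqP->].
Qed.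

Lemma arrows_uniq a b n s : uniq (arrows a b n s).
Proof. exact/filter_uniq/cand_uniq. Qed.

Lemma mem_cand s al : genuine s al -> al \in cand s.
Proof.
case: al => [[i j] kd] /and3P[hj hi _].
apply/flattenP; exists (flatten [seq [:: (i0, j, false); (i0, j, true)] | i0 <- iota 0 (rowl s j)]).
  by apply/mapP; exists j => //; rewrite mem_iota.
apply/flattenP; exists [:: (i, j, false); (i, j, true)].
  by apply/mapP; exists i => //; rewrite mem_iota.
by case: kd; rewrite !inE eqxx ?orbT.
Qed.

Lemma mem_arrows a b n s al : (al \in arrows a b n s) = good a b n s al.
Proof.
rewrite mem_filter; case E: (good a b n s al) => //=.
apply: mem_cand; move: E; case: al => [[i j] kd] /= /andP[]//.
Qed.

Lemma sumn_iota m (F : nat -> nat) : sumn [seq F i | i <- iota 0 m] = \sum_(i < m) F i.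
Proof. by rewrite sumnE big_map -(big_mkord xpredT) /index_iota subn0. Qed.

Lemma size_arrows a b n s : size (arrows a b n s) = beta a b n s.
Proof.
rewrite size_filter /cand count_flatten -map_comp sumn_iota /beta.
apply: eq_bigr => j _ /=.
rewrite count_flatten -map_comp sumn_iota.
apply: eq_bigr => i _ /=.
have hj := ltn_ord j; have hi := ltn_ord i.
rewrite /genuine hj hi /= addn0 andbC.
by case: (u_inv a b n s i j && _).
Qed.

Local Open Scope ring_scope.

Lemma zeta_exp (K : fieldType) n (zeta : K) (z : int) :
  n.-primitive_root zeta -> (zeta ^ z == 1) = (n%:Z %| z)%Z.
Proof.
move=> pz; rewrite dvdzE /=; case: z => m.
- by rewrite /= (prim_order_dvd pz).
- by rewrite /= invr_eq1 (prim_order_dvd pz).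
Qed.

Lemma zeta_neq0 (K : fieldType) n (zeta : K) : (0 < n)%N -> n.-primitive_root zeta -> zeta != 0.
Proof.
move=> n0 pz; apply/eqP => z0; have := prim_expr_order pz.
by rewrite z0 expr0n; case: n n0 {pz} => //= n _; move/eqP; rewrite eq_sym oner_eq0.
Qed.

Lemma expz2 (K : fieldType) (t : K) (a b d1 d2 : int) : t != 0 ->
  (t ^ a) ^ d1 * (t ^ b) ^ d2 = t ^ (a * d1 + b * d2).
Proof. by move=> t0; rewrite !exprz_exp expfzDr. Qed.

Lemma two_pow_eq1 (K : numFieldType) (d : int) : (2 : K) ^ d = 1 -> d = 0.
Proof.
have h : forall m : nat, (2 : K) ^+ m.+1 != 1.
  move=> m; apply/eqP => e; have := exprn_egt1 m.+1 (x := (2:K)) (ltr1n _ 2).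
  by rewrite e ltxx.
case: d => m /=.
- case: m => [|m] // e; exfalso; move/negP: (h m); apply; apply/eqP; exact: e.
- move/eqP; rewrite invr_eq1 => e; exfalso; by move/negP: (h m); apply.
Qed.

Lemma two_pow_inj (K : numFieldType) (d1 d2 : int) : (2 : K) ^ d1 = 2 ^ d2 -> d1 = d2.
Proof.
move=> e.
have t0 : (2 : K) != 0 by rewrite pnatr_eq0.
have : (2 : K) ^ (d1 - d2) = 1.
  by rewrite expfzDr // e -expfzDr // subrr expr0z.
move/two_pow_eq1 => /eqP; rewrite subr_eq0 => /eqP.
by [].
Qed.


Lemma INV (K : fieldType) n (zeta : K) a b s (u : homfun K) x y k l :
  (0 < n)%N -> n.-primitive_root zeta -> tangent zeta a b s u -> u x y k l != 0 ->
  (n%:Z %| a * (k%:Z - x%:Z) + b * (l%:Z - y%:Z))%Z.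
Proof.
move=> n0 pz [_ hu] h.
have := congr1 (fun f => f x y k l) hu; rewrite /act expz2 ?(zeta_neq0 n0 pz) //.
rewrite -{2}(mul1r (u x y k l)) => /(mulIf h) e.
by rewrite -(zeta_exp _ pz) e.
Qed.

Lemma WT (K : numFieldType) p q w (u : homfun K) x y k l :
  T_weight p q w u -> u x y k l != 0 ->
  w = - p%:Z * (k%:Z - x%:Z) + - q%:Z * (l%:Z - y%:Z).
Proof.
move=> hw h.
have t0 : (2 : K) != 0 by rewrite pnatr_eq0.
have := congr1 (fun f => f x y k l) (hw 2 t0); rewrite /act expz2 //.
move=> /(mulIf h) e; apply/esym; exact: two_pow_inj e.
Qed.

Lemma BD (K : fieldType) s (u : homfun K) x y k l :
  is_hom s u -> u x y k l != 0 -> (y <= l + size s)%N.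
Proof.
move=> [h0 _ hy] h; rewrite leqNgt; apply/negP => hl; move/eqP: h; apply.
elim: l y hl => [|l IH] [|y] hl //.
- case: (boolP (k < rowl s 0)%N) => hk.
  + rewrite hy // /in_diag rowlN //; lia.
  + by apply: h0; rewrite /in_diag hk orbT.
- case: (boolP (k < rowl s l.+1)%N) => hk.
  + rewrite hy //; first (apply: IH; lia).
    rewrite /in_diag rowlN //; lia.
  + by apply: h0; rewrite /in_diag hk orbT.
Qed.

Lemma owner_pos s x y k l al : owner s x y k l = Some al ->
  (k < x)%N || ((k == x) && (l < y)%N).
Proof.
rewrite /owner; case: ifP => // _; case: ifP => // _.
by case: ifP.
Qed.

Lemma good_inv a b n s al : genuine s al ->
  good a b n s al = (n%:Z %| a * dk s al + b * dl s al)%Z.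
Proof.
case: al => [[i j] []] /= g; rewrite g /=.
- move: g => /and3P[_ hi /eqP he].
  rewrite /u_inv /inv_arrow.
  have -> : (rowl s j)%:Z - 1 = i%:Z by rewrite he; lia.
  rewrite !dvdzE; congr (_ %| _)%N.
  have -> : a * (i%:Z - i%:Z) + b * ((colh s i)%:Z - j%:Z) = - (a * 0 + b * (j%:Z - (colh s i)%:Z)) by ring.
  by rewrite abszN.
- rewrite /d_inv /inv_arrow !dvdzE; congr (_ %| _)%N.
  set R := (rowl s j)%:Z; set C := (colh s i)%:Z.
  have -> : a * (R - i%:Z) + b * (j%:Z - (C - 1)) = - (a * (i%:Z - R) + b * (C - 1 - j%:Z)) by ring.
  by rewrite abszN.
Qed.


Lemma funext4 (K : Type) (f g : homfun K) : (forall x y k l, f x y k l = g x y k l) -> f = g.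
Proof.
move=> H; do 4 (apply: functional_extensionality => ?); exact: H.
Qed.

Lemma good_genuine a b n s al : good a b n s al -> genuine s al.
Proof. by case: al => [[i j] kd] /= /andP[]. Qed.

Lemma Bvec_tangent (K : fieldType) n (zeta : K) a b s al :
  (0 < n)%N -> n.-primitive_root zeta -> sorted geq s -> al \in arrows a b n s ->
  tangent zeta a b s (Bvec K s al).
Proof.
move=> n0 pz Hs hA; split; first exact: Bvec_hom.
apply: funext4 => x y k l; rewrite /act /Bvec.
case: (boolP (owner s x y k l == Some al)) => E; last by rewrite mulr0.
move/eqP: E => E; have [G _ _ e1 e2] := owner_facts Hs E.
rewrite expz2 ?(zeta_neq0 n0 pz) // e1 e2.
have : (zeta ^ (a * dk s al + b * dl s al) == 1).
  by rewrite (zeta_exp _ pz) -good_inv // -mem_arrows.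
by move/eqP => ->; rewrite mul1r.
Qed.

Definition wt (p q : nat) s al : int := - p%:Z * dk s al + - q%:Z * dl s al.

Lemma Bvec_weight (K : fieldType) s p q al :
  sorted geq s -> T_weight p q (wt p q s al) (Bvec K s al).
Proof.
move=> Hs t t0; apply: funext4 => x y k l; rewrite /act /Bvec.
case: (boolP (owner s x y k l == Some al)) => E; last by rewrite !mulr0.
move/eqP: E => E; have [G _ _ e1 e2] := owner_facts Hs E.
by rewrite expz2 // e1 e2.
Qed.

Lemma wt_pos s p q al : sorted geq s -> genuine s al -> (0 < q)%N -> (q * size s < p)%N ->
  0 < wt p q s al.
Proof.
move=> Hs; case: al => [[i j] kd] /= /and3P[hj hi he] q0 hp; rewrite /wt /=.
have hc : (j < colh s i)%N by rewrite -diag.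
have hC := colh_size s i.
case: kd {he} => /=.
- nia.
- nia.
Qed.

Lemma KEY (K : numFieldType) n (zeta : K) a b s p q (u : homfun K) w :
  (0 < n)%N -> n.-primitive_root zeta -> sorted geq s -> (q * size s < p)%N ->
  tangent zeta a b s u -> 0 < w -> T_weight p q w u ->
  forall x y k l, u x y k l =
    \sum_(g < size (arrows a b n s))
       atp u (piv s (nth (0%N, 0%N, false) (arrows a b n s) g)) *
       Bvec K s (nth (0%N, 0%N, false) (arrows a b n s) g) x y k l.
Proof.
move=> n0 pz Hs hp htan w0 hw x y k l.
have hu := htan.1; have [h0 _ _] := hu.
set A := arrows a b n s; set d0 := (0%N, 0%N, false).
have UA : uniq A by exact: arrows_uniq.
case O: (owner s x y k l) => [al|].
- have [G hx hk e1 e2] := owner_facts Hs O.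
  case: (boolP (al \in A)) => hA.
  + have hi : (index al A < size A)%N by rewrite index_mem.
    pose g0 : 'I_(size A) := Ordinal hi.
    rewrite (bigD1 g0) //= big1 ?addr0.
    * rewrite /Bvec nth_index // O eqxx mulr1.
      by rewrite (ML_D Hs hu hx hk (owner_pos O)) O.
    * move=> g hg; rewrite /Bvec O.
      have -> : (Some al == Some (nth d0 A g)) = false; last by rewrite mulr0.
      apply/negbTE; apply: contra hg => /eqP [e]; apply/eqP; apply: val_inj => /=.
      by rewrite e index_uniq.
  + rewrite big1; last first.
      move=> g _; rewrite /Bvec O.
      have -> : (Some al == Some (nth d0 A g)) = false; last by rewrite mulr0.
      apply/negbTE/negP => /eqP [e]; move: hA; by rewrite e mem_nth.
    apply/eqP/negPn/negP => hu0.
    have := INV n0 pz htan hu0; rewrite e1 e2 -good_inv // -mem_arrows.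
    by rewrite (negbTE hA).
- rewrite big1; last by move=> g _; rewrite /Bvec O mulr0.
  apply/eqP/negPn/negP => hu0.
  case: (boolP (in_diag s x y || ~~ in_diag s k l)) => hval.
    by move: hu0; rewrite h0 // eqxx.
  move/norP: hval => [hx /negbNE hk].
  case: (boolP ((k < x)%N || ((k == x) && (l < y)%N))) => P.
    by move: hu0; rewrite (ML_D Hs hu hx hk P) O eqxx.
  have ew := WT hw hu0; have hb := BD hu hu0.
  move/norP: P => [h1 h2].
  case: (ltngtP k x) => hkx.
  + by rewrite hkx in h1.
  + move: w0; rewrite ew; nia.
  + move: h2; rewrite hkx eqxx /= => h2.
    move: w0; rewrite ew; nia.
Qed.

Unset Implicit Arguments.

Theorem proposition3p1 (K : numClosedFieldType) (r n : nat) (a b : int) (zeta : K) :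
  (0 < r)%N -> (0 < n)%N -> coprimez a b -> n.-primitive_root zeta ->
  exists f : nat -> nat, forall p q : nat, (0 < q)%N -> (f q < p)%N ->
    forall s : seq nat, in_B r a b n s ->
      has_dim (Tplus zeta a b p q s) (beta a b n s).
Proof.
move=> r0 n0 _ pz; exists (fun q => q * (r * n))%N => p q q0 hp s hs.
move: hs => /and3P[/andP[Hs Hpos] /eqP Hsum _].
have HN : (size s <= r * n)%N by rewrite -Hsum; exact: size_sumn.
have hp' : (q * size s < p)%N by apply: leq_ltn_trans hp; exact: leq_mul.
rewrite -size_arrows.
set A := arrows a b n s; set d0 := (0%N, 0%N, false).
have UA : uniq A by exact: arrows_uniq.
exists (fun h : 'I_(size A) => Bvec K s (nth d0 A h)); split.
- move=> h; have hA : nth d0 A h \in A by exact: mem_nth.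
  exists 1%N, (fun _ => 1), (fun _ => Bvec K s (nth d0 A h)); split.
  + move=> _; split; first exact: (Bvec_tangent n0 pz Hs hA).
    exists (wt p q s (nth d0 A h)); split; last exact: Bvec_weight.
    apply: (wt_pos Hs _ q0 hp'); apply: (good_genuine (a:=a) (b:=b) (n:=n)); by rewrite -mem_arrows.
  + apply: funext4 => x y k l; by rewrite /lincomb big_ord1 mul1r.
- move=> c hc h.
  have := congr1 (fun f => atp f (piv s (nth d0 A h))) hc.
  rewrite /atp /lincomb /= (bigD1 h) //= big1 ?addr0.
  + have G : genuine s (nth d0 A h) by apply: (good_genuine (a:=a) (b:=b) (n:=n)); rewrite -mem_arrows mem_nth.
    have := owner_piv Hs G; rewrite /atp => O.
    by rewrite /Bvec O eqxx mulr1.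
  + move=> g hg.
    have G : genuine s (nth d0 A h) by apply: (good_genuine (a:=a) (b:=b) (n:=n)); rewrite -mem_arrows mem_nth.
    have := owner_piv Hs G; rewrite /atp => O.
    rewrite /Bvec O.
    have -> : (Some (nth d0 A h) == Some (nth d0 A g)) = false; last by rewrite mulr0.
    apply/negbTE; apply: contra hg => /eqP [e]; apply/eqP; apply: val_inj => /=.
    by apply/eqP; rewrite -(nth_uniq d0 _ _ UA) // e.
- move=> phi [m [c [v [hv ->]]]].
  exists (fun g => atp (lincomb c v) (piv s (nth d0 A g))).
  apply: funext4 => x y k l; rewrite /lincomb.
  under eq_bigr => h _.
    have [htan [w [w0 hw]]] := hv h.
    rewrite (KEY n0 pz Hs hp' htan w0 hw x y k l) mulr_sumr.
  over.
  rewrite exchange_big /=; apply: eq_bigr => g _.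
  rewrite /atp /= mulr_suml; apply: eq_bigr => h _; by rewrite mulrA.
Qed.
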